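(* Let $N\ge 1$ and $n\ge 1$ be integers, and let $x>1$ and $1\le y<2$ be real numbers. Let $\mathcal{S}_0,\dots,\mathcal{S}_{n-1}$ be nonempty sets of QPSK sequences of length $N$ such that, for every $0\le i\le n-1$: (a) $\mathrm{PEP}(\mathbf{s})\le x\,y^{2i}N$ for every $\mathbf{s}\in\mathcal{S}_i$; and (b) if $\mathbf{s}\in\mathcal{S}_i$ then $j^m\mathbf{s}\in\mathcal{S}_i$ for every $m\in\mathbb{Z}_4$. Let $\mathcal{A}$ be the set of all $2^{2n}$-QAM sequences $\mathbf{a}$ associated with tuples $(\mathbf{s}_0,\dots,\mathbf{s}_{n-1})$ with $\mathbf{s}_i\in\mathcal{S}_i$ for all $i$. Then $$\mathrm{PMEPR}(\mathcal{A})\le \frac{3}{4}\cdot\frac{2^{2n}}{2^{2n}-1}\cdot\left(\frac{1-(\frac{y}{2})^{n}}{1-\frac{y}{2}}\right)^2\cdot x.$$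
   Context: Let $j=\sqrt{-1}$. Fix $T>0$ and reals $f_0,\Delta f$ with $T\Delta f$ a positive integer; set $f_k=f_0+k\Delta f$. For a complex sequence $\mathbf{a}=(a_0,\dots,a_{N-1})$ define $S_{\mathbf{a}}(t)=\sum_{k=0}^{N-1}a_ke^{2\pi j f_k t}$, $P_{\mathbf{a}}(t)=|S_{\mathbf{a}}(t)|^2$, and $\mathrm{PEP}(\mathbf{a})=\sup_{t\in[0,T]}P_{\mathbf{a}}(t)$. A QPSK sequence of length $N$ is a sequence $\mathbf{s}=(s_0,\dots,s_{N-1})$ with every $s_k\in\{1,j,-1,-j\}$; $j^m\mathbf{s}=(j^ms_0,\dots,j^ms_{N-1})$. The $2^{2n}$-QAM sequence associated with QPSK sequences $\mathbf{s}_0,\dots,\mathbf{s}_{n-1}$, $\mathbf{s}_i=(s_{i,0},\dots,s_{i,N-1})$, is $\mathbf{a}=(a_0,\dots,a_{N-1})$ with $a_k=\frac{\sqrt2}{2}e^{\pi j/4}\sum_{i=0}^{n-1}2^{n-1-i}s_{i,k}$. The mean envelope power of $\mathcal{A}$ is $P_{av}(\mathcal{A})=\mathbb{E}\big[\frac1T\int_0^TP_{\mathbf{a}}(t)\,dt\big]=\mathbb{E}\|\mathbf{a}\|^2$, where the expectation is over $\mathbf{a}$ associated with $(\mathbf{s}_0,\dots,\mathbf{s}_{n-1})$ chosen uniformly at random from $\mathcal{S}_0\times\cdots\times\mathcal{S}_{n-1}$ (each $\mathbf{s}_i$ uniform in $\mathcal{S}_i$, independently). The peak-to-mean envelope power ratio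 is $\mathrm{PMEPR}(\mathcal{A})=\max_{\mathbf{a}\in\mathcal{A}}\mathrm{PEP}(\mathbf{a})/P_{av}(\mathcal{A})$. *)

(* Defs.v *)
From HB Require Import structures.
From mathcomp Require Import all_boot all_order all_algebra.
From mathcomp Require Import all_classical all_reals all_analysis.
From mathcomp Require Import complex.
Set Implicit Arguments. Unset Strict Implicit. Unset Printing Implicit Defensive.
Import Order.TTheory GRing.Theory Num.Theory.
Local Open Scope classical_set_scope.
Local Open Scope ring_scope.
Local Open Scope complex_scope.

Section QAM.
Variable R : realType.

Definition expj (th : R) : R[i] := (cos th) +i* (sin th).

Definition sqmod (z : R[i]) : R := complex.Re z ^+ 2 + complex.Im z ^+ 2.

Definition Ssig (N : nat) (f0 df : R) (a : 'I_N -> R[i]) (t : R) : R[i] :=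
  \sum_(k < N) a k * expj (2 * pi * (f0 + k%:R * df) * t).

Definition Penv (N : nat) (f0 df : R) (a : 'I_N -> R[i]) (t : R) : R :=
  sqmod (Ssig f0 df a t).

Definition PEP (N : nat) (T f0 df : R) (a : 'I_N -> R[i]) : R :=
  sup [set Penv f0 df a t | t in `[0, T]%classic].

(* A QPSK sequence of length N: s_k = j^(e_k) with e_k in Z_4 = {0,1,2,3},
   i.e. s_k in {1, j, -1, -j}. *)
Definition qpsk (N : nat) := {ffun 'I_N -> 'I_4}.
Definition qpsk_seq (N : nat) (s : qpsk N) : 'I_N -> R[i] :=
  fun k => 'i ^+ (s k).

Definition qam_seq (n N : nat) (ss : {ffun 'I_n -> qpsk N}) : 'I_N -> R[i] :=
  fun k => ((Num.sqrt (2 : R) / 2)%:C * expj (pi / 4)) *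
           \sum_(i < n) (2 ^+ (n - 1 - i))%:R * qpsk_seq (ss i) k.

Definition sqnorm (N : nat) (a : 'I_N -> R[i]) : R := \sum_(k < N) sqmod (a k).

Definition in_prod (n N : nat) (S : 'I_n -> {set qpsk N})
  (ss : {ffun 'I_n -> qpsk N}) : bool := [forall i, ss i \in S i].

(* P_av(A) = E ||a||^2, expectation over (s_0,...,s_{n-1}) uniform on
   S_0 x ... x S_{n-1} (i.e. independent uniform components). *)
Definition Pav (n N : nat) (S : 'I_n -> {set qpsk N}) : R :=
  (\sum_(ss | in_prod S ss) sqnorm (qam_seq ss)) /
  (#|[pred ss | in_prod S ss]|)%:R.

(* PMEPR(A) = max_{a in A} PEP(a) / P_av(A), A = QAM sequences of tuples
   in S_0 x ... x S_{n-1}.  (All terms are >= 0, so max with 0 is harmless.) *)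
Definition PMEPR (n N : nat) (T f0 df : R) (S : 'I_n -> {set qpsk N}) : R :=
  \big[Num.max/0]_(ss | in_prod S ss) (PEP T f0 df (qam_seq ss) / Pav S).

End QAM.
Arguments qpsk_seq {R N} s k.

(* Main.v *)
Require Import Defs.
From HB Require Import structures.
From mathcomp Require Import all_boot all_order all_algebra.
From mathcomp Require Import all_classical all_reals all_analysis.
From mathcomp Require Import complex.
From mathcomp Require Import ring lra.
Import Order.TTheory GRing.Theory Num.Theory.
Local Open Scope ring_scope.
Local Open Scope complex_scope.

Section Aux.
Variable R : realType.
Local Notation C := R[i].

Definition gi (z : C) : R := complex.Re z + 2 * complex.Im z.

Lemma i4 : 'i ^+ 4 = 1 :> C.
Proof. by rewrite (exprM 'i 2 2) sqr_i sqrrN expr1n. Qed.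

Lemma ipow_mod (a : nat) : 'i ^+ (a %% 4) = 'i ^+ a :> C.
Proof. by rewrite {2}(divn_eq a 4) exprD mulnC exprM i4 expr1n mul1r. Qed.

Lemma ipow_inj (a b : 'I_4) : 'i ^+ a = 'i ^+ b :> C -> a = b.
Proof.
move=> /(congr1 gi); apply: contra_eq => neq.
have e2 : 'i ^+ 2 = -1 :> C by rewrite sqr_i.
have e3 : 'i ^+ 3 = - 'i :> C by rewrite exprS e2 mulrN1.
case: a b neq => [[|[|[|[|a]]]] Ha] [[|[|[|[|b]]]] Hb] //= _;
  rewrite ?expr0 ?expr1 ?e2 ?e3 /gi /=; apply/eqP; lra.
Qed.

Lemma normi : `|'i| = 1 :> C.
Proof. by rewrite complexiE normCi. Qed.

Lemma sqmodE (z : C) : (sqmod z)%:C = z * z^*.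
Proof. by rewrite /sqmod add_Re2_Im2 sqr_normc. Qed.

Lemma ipow_conj (m : nat) : 'i ^+ m * ('i ^+ m)^* = 1 :> C.
Proof. by rewrite -sqr_normc normrX normi expr1n expr1n. Qed.

Definition rot {N : nat} (s : qpsk N) : qpsk N := [ffun k => inZp (s k).+1].

Lemma rotE N (s : qpsk N) k : @qpsk_seq R _ (rot s) k = 'i * qpsk_seq s k.
Proof. by rewrite /qpsk_seq ffunE /= ipow_mod exprS. Qed.

Lemma seq_inj N (s s' : qpsk N) :
  (forall k, @qpsk_seq R _ s k = qpsk_seq s' k) -> s = s'.
Proof. by move=> h; apply/ffunP => k; apply: ipow_inj; apply: h. Qed.

Lemma rot_inj N : injective (@rot N).
Proof.
move=> s s' /(congr1 (fun u => @qpsk_seq R _ u)) h; apply: seq_inj => k.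
have := congr1 (fun f => f k) h; rewrite /= !rotE => /mulfI; apply.
by apply/eqP => /(congr1 (@complex.Im R)) /=; apply/eqP; rewrite oner_eq0.
Qed.
End Aux.

Section Sym.
Variables (R : realType) (n N : nat) (S : 'I_n -> {set qpsk N}).
Local Notation C := R[i].
Hypothesis Hrot : forall (i : 'I_n) (s : qpsk N), s \in S i -> forall m : 'I_4,
     exists2 s' : qpsk N, s' \in S i &
       forall k : 'I_N, qpsk_seq (R:=R) s' k = 'i ^+ m * qpsk_seq s k.

Lemma rot_mem i s : (rot s \in S i) = (s \in S i).
Proof.
apply/idP/idP => H.
  have [s' Hs' E] := @Hrot i _ H (Ordinal (isT : (3 < 4)%N)).
  suff -> : s = s' by [].
  apply: (@seq_inj R) => k; rewrite E rotE /= mulrA -exprSr i4 mul1r //.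
have [s' Hs' E] := @Hrot i _ H (Ordinal (isT : (1 < 4)%N)).
suff -> : rot s = s' by [].
by apply: (@seq_inj R) => k; rewrite E rotE /= expr1.
Qed.

Definition phi (i : 'I_n) (ss : {ffun 'I_n -> qpsk N}) : {ffun 'I_n -> qpsk N} :=
  [ffun j => if j == i then rot (ss j) else ss j].

Lemma phi_inj i : injective (phi i).
Proof.
move=> ss ss' h; apply/ffunP => j; have := congr1 (fun f : {ffun _ -> _} => f j) h.
by rewrite /= !ffunE; case: (j == i) => //; apply: rot_inj.
Qed.

Lemma phi_prod i ss : in_prod S (phi i ss) = in_prod S ss.
Proof.
apply: eq_forallb => j; rewrite ffunE; case: (j == i) => //.
exact: rot_mem.
Qed.

Lemma offdiag i j k : i != j ->
  \sum_(ss | in_prod S ss) qpsk_seq (R:=R) (ss i) k * (qpsk_seq (ss j) k)^* = 0.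
Proof.
move=> nij.
set F := fun ss : {ffun 'I_n -> qpsk N} => qpsk_seq (R:=R) (ss i) k * (qpsk_seq (ss j) k)^*.
have -> : \sum_(ss | in_prod S ss) qpsk_seq (R:=R) (ss i) k * (qpsk_seq (ss j) k)^*
   = \sum_(ss | in_prod S ss) F ss by [].
have HX : \sum_(ss | in_prod S ss) F ss = 'i * \sum_(ss | in_prod S ss) F ss.
  rewrite [LHS](reindex_inj (phi_inj i)) /= mulr_sumr.
  apply: eq_big => ss; first by rewrite phi_prod.
  move=> _; rewrite /F !ffunE eqxx eq_sym (negbTE nij) rotE mulrA //.
move: HX; set X := \sum_(ss | _) _ => HX.
have : X * (1 - 'i) = 0 by rewrite mulrBr mulr1 mulrC -HX subrr.
move/eqP; rewrite mulf_eq0 => /orP[/eqP //|]; rewrite subr_eq0 => /eqP.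
by move/(congr1 (@complex.Im R)) => /= /eqP; rewrite eq_sym oner_eq0.
Qed.
End Sym.

Section Pav.
Variables (R : realType) (n N : nat) (S : 'I_n -> {set qpsk N}).
Local Notation C := R[i].
Hypothesis Hrot : forall (i : 'I_n) (s : qpsk N), s \in S i -> forall m : 'I_4,
     exists2 s' : qpsk N, s' \in S i &
       forall k : 'I_N, qpsk_seq (R:=R) s' k = 'i ^+ m * qpsk_seq s k.

Definition cc : C := (Num.sqrt (2 : R) / 2)%:C * expj (pi / 4).
Definition ww (i : 'I_n) : C := (2 ^+ (n - 1 - i))%:R.
Definition AA (ss : {ffun 'I_n -> qpsk N}) (k : 'I_N) : C :=
  \sum_(i < n) ww i * qpsk_seq (ss i) k.

Lemma qamE ss k : qam_seq R ss k = cc * AA ss k.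
Proof. by []. Qed.

Lemma card_sum : \sum_(ss | in_prod S ss) (1 : C) = #|[pred ss | in_prod S ss]|%:R.
Proof. by rewrite sumr_const. Qed.

Lemma sumF i j k : \sum_(ss | in_prod S ss) qpsk_seq (R:=R) (ss i) k * (qpsk_seq (ss j) k)^*
  = (i == j)%:R * #|[pred ss | in_prod S ss]|%:R.
Proof.
have [<-|nij] := eqVneq i j.
  by rewrite mul1r -card_sum; apply: eq_bigr => ss _; rewrite ipow_conj.
by rewrite mul0r offdiag.
Qed.


Lemma AAconj ss k : AA ss k * (AA ss k)^* =
  \sum_(i < n) \sum_(j < n) (ww i * ww j) * (qpsk_seq (R:=R) (ss i) k * (qpsk_seq (ss j) k)^*).
Proof.
rewrite /AA rmorph_sum mulr_suml; apply: eq_bigr => i _.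
rewrite mulr_sumr; apply: eq_bigr => j _.
by rewrite rmorphM /ww rmorph_nat mulrACA.
Qed.

Lemma sum_AA k : \sum_(ss | in_prod S ss) AA ss k * (AA ss k)^* =
  #|[pred ss | in_prod S ss]|%:R * \sum_(i < n) ww i * ww i.
Proof.
under eq_bigr do rewrite AAconj.
rewrite exchange_big mulr_sumr; apply: eq_bigr => i _ /=.
rewrite exchange_big /=.
under eq_bigr do rewrite -mulr_sumr sumF.
rewrite (bigD1 i) //= big1 ?addr0; first by rewrite eqxx mul1r mulrC.
by move=> j /negbTE; rewrite eq_sym => ->; rewrite mul0r mulr0.
Qed.


Lemma sqmodM (z w : C) : sqmod (z * w) = sqmod z * sqmod w.
Proof.
apply: complexI; rewrite (@sqmodE R (z * w)).
transitivity ((sqmod z)%:C * (sqmod w)%:C); last by rewrite rmorphM.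
by rewrite !sqmodE -!sqr_normc normrM exprMn.
Qed.

Lemma sqmod_expj (th : R) : sqmod (expj th) = 1.
Proof. by rewrite /sqmod /expj /= cos2Dsin2. Qed.

Lemma sqmod_real (a : R) : sqmod a%:C = a ^+ 2.
Proof. by rewrite /sqmod /= expr0n /= addr0. Qed.

Lemma sqmod_cc : sqmod cc = 1 / 2.
Proof.
rewrite /cc sqmodM sqmod_expj mulr1 sqmod_real expr_div_n sqr_sqrtr //.
by rewrite expr2 -{1}(mulr1 2) -mulf_div divff // ?mul1r // pnatr_eq0.
Qed.

Definition Qr : R := \sum_(i < n) ((2 ^+ (n - 1 - i))%:R) ^+ 2.

Lemma sum_sqnorm : \sum_(ss | in_prod S ss) sqnorm (qam_seq R ss) =
  #|[pred ss | in_prod S ss]|%:R * (N%:R * (1 / 2 * Qr)).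
Proof.
apply: complexI.
transitivity (\sum_(ss | in_prod S ss) (sqnorm (qam_seq R ss))%:C); first by rewrite rmorph_sum.
have E : forall ss : {ffun 'I_n -> qpsk N}, (sqnorm (qam_seq R ss))%:C
   = \sum_(k < N) (sqmod cc)%:C * (AA ss k * (AA ss k)^*).
  move=> ss; rewrite /sqnorm.
  transitivity (\sum_(k < N) (sqmod (qam_seq R ss k))%:C); first by rewrite rmorph_sum.
  apply: eq_bigr => k _.
  by rewrite qamE sqmodM -(@sqmodE R (AA ss k)) rmorphM.
under eq_bigr do rewrite E.
rewrite exchange_big /=.
under eq_bigr do rewrite -mulr_sumr sum_AA.
have QE : \sum_(i < n) ww i * ww i = Qr%:C.
  rewrite /Qr rmorph_sum; apply: eq_bigr => i _.
  have h (m : nat) : ((m%:R : R) ^+ 2)%:C = (m%:R : C) * m%:R.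
    by rewrite rmorphXn rmorph_nat expr2.
  by rewrite /ww; symmetry; apply: h.
rewrite sumr_const card_ord sqmod_cc QE.
rewrite -(rmorph_nat (real_complex R) #|_|) -!rmorphM -rmorphMn.
have -> : 1 / 2 * (#|[pred ss | in_prod S ss]|%:R * Qr) *+ N =
  #|[pred ss | in_prod S ss]|%:R * (N%:R * (1 / 2 * Qr)) :> R.
  by rewrite -mulr_natr; ring.
by [].
Qed.

End Pav.

Section PEPs.
Variable R : realType.
Local Notation C := R[i].
Local Notation nm := (@Normc.normc R).

Lemma PEP_le (T f0 df : R) N (a : 'I_N -> C) M : 0 <= T ->
  (forall t, 0 <= t <= T -> Penv f0 df a t <= M) -> PEP T f0 df a <= M.
Proof.
move=> T0 h; apply: ge_sup.
  by exists (Penv f0 df a 0); exists 0 => //=; rewrite in_itv /= lexx T0.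
by move=> _ [t Ht <-]; apply: h; move: Ht; rewrite /= in_itv.
Qed.

Lemma le_PEP (T f0 df : R) N (a : 'I_N -> C) K t :
  (forall t, Penv f0 df a t <= K) -> 0 <= t <= T -> Penv f0 df a t <= PEP T f0 df a.
Proof.
move=> h Ht; apply: ub_le_sup.
  by exists K => _ [s _ <-]; exact: h.
by exists t => //=; rewrite in_itv.
Qed.

Lemma nmE (z : C) : nm z = Num.sqrt (sqmod z).
Proof. by case: z. Qed.

Lemma sqmod_nm (z : C) : sqmod z = nm z ^+ 2.
Proof. by rewrite nmE sqr_sqrtr // /sqmod addr_ge0 // sqr_ge0. Qed.

Lemma nm_ge0 (z : C) : 0 <= nm z.
Proof. by rewrite nmE sqrtr_ge0. Qed.

Lemma nm_sum m (F : 'I_m -> C) : nm (\sum_(i < m) F i) <= \sum_(i < m) nm (F i).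
Proof.
elim/big_rec2: _; first by rewrite nmE /sqmod /= expr0n /= addr0 sqrtr0.
move=> i b a _ h; exact: le_trans (@le_normcD R (F i) a) (lerD (lexx _) h).
Qed.

Lemma nm_ipow m : nm ('i ^+ m) = 1.
Proof.
rewrite nmE; suff -> : sqmod ('i ^+ m : C) = 1 by rewrite sqrtr1.
by apply: complexI; rewrite sqmodE ipow_conj.
Qed.

Lemma nm_expj (th : R) : nm (expj th) = 1.
Proof. by rewrite nmE sqmod_expj sqrtr1. Qed.

Lemma nm_nat m : nm (m%:R : C) = m%:R.
Proof.
by rewrite -(rmorph_nat (real_complex R)) nmE /= sqmod_real sqrtr_sqr ger0_norm.
Qed.

Lemma Penv_qpsk_ub (f0 df : R) N (s : qpsk N) t : Penv f0 df (qpsk_seq s) t <= N%:R ^+ 2.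
Proof.
rewrite /Penv sqmod_nm lerXn2r ?nnegrE ?nm_ge0 ?ler0n //.
rewrite /Ssig; apply: le_trans (nm_sum _ _) _.
have -> : (N%:R : R) = \sum_(k < N) 1 by rewrite sumr_const card_ord.
apply: ler_sum => k _.
by rewrite Normc.normcM nm_ipow nm_expj mulr1.
Qed.
End PEPs.

Section Bound.
Variables (R : realType) (n N : nat).
Local Notation C := R[i].
Local Notation nm := (@Normc.normc R).

Lemma Ssig_qam (f0 df : R) (ss : {ffun 'I_n -> qpsk N}) t :
  Ssig f0 df (qam_seq R ss) t =
  cc R * \sum_(i < n) ww R n i * Ssig f0 df (qpsk_seq (ss i)) t.
Proof.
rewrite /Ssig.
under eq_bigr do rewrite qamE -mulrA.
rewrite -mulr_sumr; congr (_ * _).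
under eq_bigr do rewrite /AA mulr_suml.
rewrite exchange_big /=; apply: eq_bigr => i _.
by rewrite mulr_sumr; apply: eq_bigr => k _; rewrite mulrA.
Qed.


Definition HH (y : R) : R := \sum_(i < n) (2 ^+ (n - 1 - i))%:R * y ^+ i.

Lemma Penv_qam_le (T f0 df x y : R) (S : 'I_n -> {set qpsk N}) ss t :
  0 <= y -> 0 <= x ->
  (forall (i : 'I_n) s, s \in S i -> PEP T f0 df (qpsk_seq s) <= x * y ^+ (2 * i) * N%:R) ->
  in_prod S ss -> 0 <= t <= T ->
  Penv f0 df (qam_seq R ss) t <= 1 / 2 * (x * N%:R) * HH y ^+ 2.
Proof.
move=> y0 x0 Hpep Pss Ht.
have xN0 : 0 <= x * N%:R by rewrite mulr_ge0.
have Hi : forall i : 'I_n, nm (ww R n i * Ssig f0 df (qpsk_seq (ss i)) t)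
    <= (2 ^+ (n - 1 - i))%:R * (Num.sqrt (x * N%:R) * y ^+ i).
  move=> i; rewrite Normc.normcM nm_nat; apply: ler_wpM2l => //.
  rewrite nmE.
  have h1 : sqmod (Ssig f0 df (qpsk_seq (ss i)) t) <= x * y ^+ (2 * i) * N%:R.
    apply: le_trans (Hpep i (ss i) _); last by move/forallP: Pss.
    exact: (@le_PEP R T f0 df _ _ _ t (@Penv_qpsk_ub R f0 df _ (ss i)) Ht).
  apply: le_trans (ler_wsqrtr h1) _.
  rewrite mulrAC sqrtrM // exprM exprAC sqrtr_sqr ger0_norm ?exprn_ge0 //.
have h2 : nm (\sum_(i < n) ww R n i * Ssig f0 df (qpsk_seq (ss i)) t)
    <= Num.sqrt (x * N%:R) * HH y.
  apply: le_trans (@nm_sum R _ _) _.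
  rewrite /HH mulr_sumr; apply: ler_sum => i _.
  by apply: le_trans (Hi i) _; rewrite mulrCA.
rewrite /Penv Ssig_qam sqmod_nm Normc.normcM.
have ncc : nm (cc R) = Num.sqrt (1 / 2) by rewrite nmE sqmod_cc.
rewrite ncc.
have HH0 : 0 <= HH y.
  by rewrite /HH sumr_ge0 // => i _; rewrite mulr_ge0 ?exprn_ge0.
apply: le_trans (_ : (Num.sqrt (1 / 2) * (Num.sqrt (x * N%:R) * HH y)) ^+ 2 <= _).
  apply: lerXn2r; rewrite ?nnegrE ?mulr_ge0 ?nm_ge0 ?sqrtr_ge0 //.
  by apply: ler_wpM2l; rewrite ?sqrtr_ge0.
rewrite !exprMn !sqr_sqrtr // ?mulrA //.
Qed.

End Bound.

Theorem theorem1 (R : realType) (T f0 df : R) (N n : nat) (x y : R)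
  (S : 'I_n -> {set qpsk N}) :
  0 < T ->
  (exists m : nat, (0 < m)%N /\ T * df = m%:R) ->
  (0 < N)%N -> (0 < n)%N ->
  1 < x -> 1 <= y -> y < 2 ->
  (forall i : 'I_n, S i != finset.set0) ->
  (forall (i : 'I_n) (s : qpsk N), s \in S i ->
     PEP T f0 df (qpsk_seq s) <= x * y ^+ (2 * i) * N%:R) ->
  (forall (i : 'I_n) (s : qpsk N), s \in S i -> forall m : 'I_4,
     exists2 s' : qpsk N, s' \in S i &
       forall k : 'I_N, qpsk_seq (R:=R) s' k = 'i ^+ m * qpsk_seq s k) ->
  PMEPR T f0 df S <=
    3 / 4 * ((2 : R) ^+ (2 * n) / (2 ^+ (2 * n) - 1)) *
    ((1 - (y / 2) ^+ n) / (1 - y / 2)) ^+ 2 * x.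
Proof.
move=> T0 _ N0 n0 x1 y1 y2 Sne Hpep Hrot.
have cardP : (0 < #|[pred ss | in_prod S ss]|)%N.
  apply/card_gt0P.
  exists [ffun i => odflt [ffun=> ord0] [pick s in S i]].
  rewrite inE; apply/forallP => i; rewrite ffunE.
  case: pickP => //= h; exfalso.
  by have /set0Pn [s Hs] := Sne i; move: (h s); rewrite Hs.
have HPav : Pav R S = N%:R * (1 / 2 * Qr R n).
  rewrite /Pav (@sum_sqnorm R n N S Hrot) mulrAC divff ?mul1r //.
  by rewrite pnatr_eq0 -lt0n.
set M := 1 / 2 * (x * N%:R) * HH R n y ^+ 2.
have PEPle : forall ss, in_prod S ss -> PEP T f0 df (qam_seq R ss) <= M.
  move=> ss Pss; apply: PEP_le; first exact: ltW.
  move=> t Ht; apply: Penv_qam_le; [lra | lra | exact: Hpep | exact: Pss | exact: Ht].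
have HQ : 2 ^+ (2 * n) - 1 = 3 * Qr R n :> R.
  rewrite exprM; have := subrXX (2 ^+ 2 : R) 1 n; rewrite expr1n => ->.
  congr (_ * _); first by rewrite expr2; lra.
  apply: eq_bigr => i _; rewrite expr1n mulr1 natrX exprAC subn1 //.
have p2 : 1 < (2 : R) ^+ (2 * n).
  by rewrite exprn_egt1 ?muln_eq0 -?lt0n ?n0 //; lra.
have Qr0 : 0 < Qr R n.
  by move: p2; rewrite -subr_gt0 HQ => h; lra.
have HHe : 2 ^+ n - y ^+ n = (2 - y) * HH R n y.
  rewrite subrXX; congr (_ * _); apply: eq_bigr => i _.
  by rewrite natrX subn1.
have Pav0 : 0 < Pav R S.
  by rewrite HPav mulr_gt0 ?ltr0n // mulr_gt0 //; lra.
have HB : M / Pav R S = 3 / 4 * ((2 : R) ^+ (2 * n) / (2 ^+ (2 * n) - 1)) *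
    ((1 - (y / 2) ^+ n) / (1 - y / 2)) ^+ 2 * x.
  rewrite HPav.
  have eQ : Qr R n = (2 ^+ (2 * n) - 1) / 3 by rewrite HQ; field.
  have eH : HH R n y = (2 ^+ n - y ^+ n) / (2 - y) by rewrite HHe; field; lra.
  rewrite /M eQ eH (expr_div_n y 2 n) mul2n -addnn exprD.
  move: p2; rewrite mul2n -addnn exprD.
  set p := (2 : R) ^+ n; set Y := y ^+ n => p2.
  have p0 : p != 0 by rewrite /p expf_neq0 //; apply/eqP; lra.
  have p1 : p * p - 1 != 0 by apply/eqP; lra.
  have N0' : (N%:R : R) != 0 by rewrite pnatr_eq0 -lt0n.
  field; rewrite p0 p1 N0' !andbT; apply/eqP; lra.
rewrite -HB /PMEPR; elim/big_rec: _ => [|ss r Pss hr].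
  apply: divr_ge0; last exact: ltW Pav0.
  have Nr : (0:R) <= N%:R by rewrite ler0n.
  have := sqr_ge0 (HH R n y); rewrite /M => h; apply: mulr_ge0 => //; apply: mulr_ge0; [lra | apply: mulr_ge0 => //; lra].
rewrite ge_max hr andbT; apply: ler_wpM2r; first by rewrite invr_ge0 ltW.
exact: PEPle.
Qed.
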